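(* For each $i\in\{1,\dots,13\}$ and each $n$ for which the graph $G_i$ (defined in the context) is defined, $q(G_i)<q(K_{1,1,n-2}^+)$.
   Context: $q(G)$ denotes the largest eigenvalue of the signless Laplacian matrix $Q(G)=D(G)+A(G)$ ($A(G)$ adjacency matrix, $D(G)$ diagonal degree matrix). $K_{1,1,n-2}^+$ is obtained from the complete tripartite graph $K_{1,1,n-2}$ by adding one edge inside the part of size $n-2$. $K_4$ is the complete graph on 4 vertices. Define graphs $U_1,\dots,U_{12}$, each with two distinguished vertices $z,w$: - $U_1$: a 4-cycle $abcda$, plus $z$ and $w$ each adjacent to $a,b,c,d$ (6 vertices). - $U_2$: a 4-cycle $abcda$ plus the chord $ac$, plus $z$ adjacent to $a,b,c,d$ and $w$ adjacent to $b,d$ (6 vertices). - $U_3$ (resp. $U_4$): $U_1$ (resp. $U_2$) plus one new vertex adjacent only to $z$ (7 vertices). - $U_5$ (resp. $U_6$): $U_1$ (resp. $U_2$) plus a new triangle whose three vertices are all adjacent to $z$ (9 vertices). - $U_7$: a $K_4$ on $\{p,q,r,w\}$, a triangle $\{t_1,t_2,t_3\}$, and $z$ adjacent to $p,q,r,t_1,t_2,t_3$ (8 vertices). - $U_8$: a $K_4$ on $\{A,B,C,w\}$, a vertex $D$ adjacent to $w$, and $z$ adjacent to $A,B,C,D$ (6 vertices). - $U_9$: a triangle $acd$ plus a vertex $b$ adjacent to $d$, plus $z$ adjacent to $a,b,c,d$ and $w$ adjacent to $a,b,c$ (6 vertices). - $U_{10}$ (resp. $U_{11}$): $U_9$ plus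 one (resp. two) new vertices each adjacent exactly to $d$ and $z$ (7, resp. 8 vertices). - $U_{12}=U_{12}(n,s)$, $s\ge3$: a star $K_{1,s}$ with center $c$ and leaves $\ell_1,\dots,\ell_s$, plus $z$ adjacent to $c,\ell_1,\dots,\ell_s$ and $w$ adjacent to $\ell_1,\dots,\ell_s$ ($s+3$ vertices). For $i=1,\dots,11$, with $n\ge 7$ and $n-|V(U_i)|\equiv 0\pmod 4$, $G_i$ is the $n$-vertex graph obtained from $U_i$ together with $\frac{n-|V(U_i)|}{4}$ vertex-disjoint new copies of $K_4$ by adding all edges between $z$ and the vertices of these copies. $G_{12}=G_{12}(n,s)$ is obtained in the same way from $U_{12}(n,s)$ with $\frac{n-s-3}{4}$ copies of $K_4$, where $s\ge 3$, $n\ge s+7$ and $n-s-3\equiv 0\pmod 4$. $G_{13}$ is obtained from the complete bipartite graph $K_{3,n-3}$ by adding one edge inside the part of size $3$, where $n\ge 7$. *)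

(* Defs.v *)
From mathcomp Require Import all_boot all_order all_algebra.
From mathcomp.real_closed Require Import polyrcf.
Set Implicit Arguments. Unset Strict Implicit. Unset Printing Implicit Defensive.
Import Order.TTheory GRing.Theory Num.Theory.

(* A simple graph on vertex set {0,...,n-1} is given by a boolean adjacency
   function on nat (only its values on 'I_n matter).  All adjacency functions
   below are symmetric and irreflexive by construction. *)

Definition Qmat (R : nzRingType) (n : nat) (adj : nat -> nat -> bool) : 'M[R]_n :=
  \matrix_(i < n, j < n)
    (if i == j then (#|[set k : 'I_n | adj i k]|)%:R else (adj i j : nat)%:R)%R.

(* largest eigenvalue of a square matrix over a real closed field: the largest
   real root of its characteristic polynomial (rootsR is sorted increasingly
   and lists all real roots of a nonzero polynomial). *)
Definition lambda_max (R : rcfType) (n : nat) (A : 'M[R]_n) : R :=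
  last 0%R (rootsR (char_poly A)).

Definition q_sl (R : rcfType) (n : nat) (adj : nat -> nat -> bool) : R :=
  lambda_max (Qmat R n adj).

Definition adj_of_edges (E : seq (nat * nat)) (i j : nat) : bool :=
  (i != j) && (((i, j) \in E) || ((j, i) \in E)).

(* K_{1,1,n-2}^+ : parts {0}, {1}, {2,...,n-1}, plus the edge 2-3 *)
Definition Kplus_adj (i j : nat) : bool :=
  (i != j) &&
  ((i <= 1) || (j <= 1)
    || ((i == 2) && (j == 3)) || ((i == 3) && (j == 2))).

(* G_13 : K_{3,n-3} with parts {0,1,2}, {3,...,n-1}, plus the edge 0-1 *)
Definition G13_adj (i j : nat) : bool :=
  (i != j) &&
  (((i <= 2) && (3 <= j)) || ((j <= 2) && (3 <= i))
    || ((i == 0) && (j == 1)) || ((i == 1) && (j == 0))).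

(* The graph obtained from a graph U on vertices {0,...,m-1} (given by its
   edge list E) with distinguished vertex z = 0, together with vertex-disjoint
   copies of K_4 on the vertices {m+4t, m+4t+1, m+4t+2, m+4t+3}, by joining z
   to every vertex of these copies.  On 'I_n with n = m + 4k this is the graph
   with k copies of K_4. *)
Definition glue_adj (m : nat) (E : seq (nat * nat)) (i j : nat) : bool :=
  (i != j) &&
  (((i < m) && (j < m) && adj_of_edges E i j)
    || ((m <= i) && (m <= j) && ((i - m) %/ 4 == (j - m) %/ 4))
    || ((i == 0) && (m <= j)) || ((j == 0) && (m <= i))).

(* Vertex labels in U_i: z = 0, w = 1, other vertices 2,3,... *)
(* U_1: a=2,b=3,c=4,d=5 *)
Definition U1_edges : seq (nat * nat) :=
  [:: (2,3); (3,4); (4,5); (5,2);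
      (0,2); (0,3); (0,4); (0,5);
      (1,2); (1,3); (1,4); (1,5)].
(* U_2: a=2,b=3,c=4,d=5, chord ac, w adjacent to b,d *)
Definition U2_edges : seq (nat * nat) :=
  [:: (2,3); (3,4); (4,5); (5,2); (2,4);
      (0,2); (0,3); (0,4); (0,5);
      (1,3); (1,5)].
Definition pend_edges : seq (nat * nat) := [:: (0,6)].
Definition tri_edges : seq (nat * nat) :=
  [:: (6,7); (7,8); (6,8); (0,6); (0,7); (0,8)].
(* U_7: K_4 on {p,q,r,w} = {2,3,4,1}, triangle {5,6,7}, z adjacent to 2..7 *)
Definition U7_edges : seq (nat * nat) :=
  [:: (2,3); (2,4); (3,4); (1,2); (1,3); (1,4);
      (5,6); (6,7); (5,7);
      (0,2); (0,3); (0,4); (0,5); (0,6); (0,7)].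
(* U_8: K_4 on {A,B,C,w} = {2,3,4,1}, D = 5 adjacent to w, z adjacent to A,B,C,D *)
Definition U8_edges : seq (nat * nat) :=
  [:: (2,3); (2,4); (3,4); (1,2); (1,3); (1,4);
      (1,5);
      (0,2); (0,3); (0,4); (0,5)].
(* U_9: a=2,b=3,c=4,d=5; triangle acd, b~d, z ~ a,b,c,d, w ~ a,b,c *)
Definition U9_edges : seq (nat * nat) :=
  [:: (2,4); (4,5); (2,5); (3,5);
      (0,2); (0,3); (0,4); (0,5);
      (1,2); (1,3); (1,4)].

Definition U_edges (i : nat) : seq (nat * nat) :=
  match i with
  | 1 => U1_edges
  | 2 => U2_edges
  | 3 => U1_edges ++ pend_edges
  | 4 => U2_edges ++ pend_edges
  | 5 => U1_edges ++ tri_edges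
  | 6 => U2_edges ++ tri_edges
  | 7 => U7_edges
  | 8 => U8_edges
  | 9 => U9_edges
  | 10 => U9_edges ++ [:: (5,6); (0,6)]
  | 11 => U9_edges ++ [:: (5,6); (0,6); (5,7); (0,7)]
  | _ => [::]
  end.

Definition U_size (i : nat) : nat :=
  match i with
  | 1 | 2 | 8 | 9 => 6
  | 3 | 4 | 10 => 7
  | 7 | 11 => 8
  | 5 | 6 => 9
  | _ => 0
  end.

Definition G_adj (i : nat) : nat -> nat -> bool := glue_adj (U_size i) (U_edges i).

(* U_12(s): z=0, w=1, c=2, leaves 3,...,s+2 *)
Definition U12_adj (s i j : nat) : bool :=
  let leaf x := (3 <= x) && (x <= s + 2) in
  (i != j) &&
  (((i == 2) && leaf j) || ((j == 2) && leaf i)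
    || ((i == 0) && ((j == 2) || leaf j)) || ((j == 0) && ((i == 2) || leaf i))
    || ((i == 1) && leaf j) || ((j == 1) && leaf i)).

(* G_12(n,s) on vertices 'I_n: U_12(s) (s+3 vertices) plus copies of K_4
   on {s+3+4t,...,s+3+4t+3}, all joined to z = 0 *)
Definition G12_adj (s i j : nat) : bool :=
  let m := s + 3 in
  (i != j) &&
  (((i < m) && (j < m) && U12_adj s i j)
    || ((m <= i) && (m <= j) && ((i - m) %/ 4 == (j - m) %/ 4))
    || ((i == 0) && (m <= j)) || ((j == 0) && (m <= i))).

(* Main.v *)
Require Import Defs.
From mathcomp Require Import all_boot all_order all_algebra.
From mathcomp.real_closed Require Import polyrcf.
From mathcomp.algebra_tactics Require Import ring lra.
From mathcomp Require Import zify.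
Import Order.TTheory GRing.Theory Num.Theory.
Local Open Scope ring_scope.

Section Gen.
Variable R : rcfType.

Definition rs (n : nat) (adj : nat -> nat -> bool) (x : nat -> R) (j : nat) : R :=
  \sum_(0 <= i < n) (adj j i)%:R * (x j + x i).

Lemma deg_sum n (adj : nat -> nat -> bool) (j : nat) :
  (#|[set k : 'I_n | adj j k]|)%:R = \sum_(k < n) (adj j k)%:R :> R.
Proof.
rewrite -sum1_card natr_sum big_mkcond /=; apply: eq_bigr => k _.
by rewrite inE; case: (adj j k).
Qed.

Lemma Qmat_col n (adj : nat -> nat -> bool) (x : nat -> R) (j : 'I_n) :
  (forall a b, adj a b = adj b a) -> (forall a, adj a a = false) ->
  \sum_(i < n) x i * Qmat R n adj i j = rs n adj x j.
Proof.
move=> sym irr.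
have -> : \sum_(i < n) x i * Qmat R n adj i j =
   \sum_(i < n) ((i == j)%:R * (x j * (#|[set k : 'I_n | adj j k]|)%:R)
                 + (adj j i)%:R * x i).
  apply: eq_bigr => i _; rewrite mxE.
  case: eqVneq => [->|ne]; first by rewrite irr mul0r addr0 mul1r mulrC.
  by rewrite mul0r add0r sym mulrC.
rewrite /rs big_mkord big_split /=.
under [RHS]eq_bigr do rewrite mulrDr.
rewrite big_split /=; congr (_ + _).
rewrite (bigD1 j) //= eqxx mul1r big1 ?addr0; last first.
  by move=> i /negPf ->; rewrite mul0r.
by rewrite -mulr_suml deg_sum mulrC.
Qed.

Lemma sorted_le_last (s : seq R) (x y : R) :
  sorted <%R s -> x \in s -> x <= last y s.
Proof.
elim: s y => [//|a s IH] y /= Hp; rewrite inE => /orP [/eqP ->|xs].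
  have := mem_last a s; rewrite inE => /orP [/eqP ->//|ls].
  have := order_path_min (@lt_trans _ _) Hp => /allP /(_ _ ls).
  by move/ltW.
by apply: IH => //; exact: path_sorted Hp.
Qed.

Lemma q_upper n (adj : nat -> nat -> bool) (x : nat -> R) (U : R) :
  (forall a b, adj a b = adj b a) -> (forall a, adj a a = false) -> 0 < U ->
  (forall j, (j < n)%N -> 0 < x j) ->
  (forall j, (j < n)%N -> rs n adj x j < U * x j) ->
  q_sl R n adj < U.
Proof.
move=> sym irr U0 xpos Hrow.
rewrite /q_sl /lambda_max.
set Q := Qmat R n adj.
have := mem_last 0 (rootsR (char_poly Q)); rewrite inE => /orP [/eqP ->//|].
set r := last _ _ => rin.
have rroot : root (char_poly Q) r.
  have := roots_on_rootsR (monic_neq0 (char_poly_monic Q)) r.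
  by rewrite rin => /andP [].
rewrite ltNge; apply/negP => Ur.
have r0 : 0 < r by apply: lt_le_trans Ur.
move: rroot; rewrite -eigenvalue_root_char => /eigenvalueP [v Hv vn0].
have [j0 Hj0] : exists j0, v 0 j0 != 0.
  apply/existsP; move: vn0; apply: contraR; rewrite negb_exists => /forallP H.
  by apply/eqP/rowP => k; rewrite mxE; move: (H k); rewrite negbK => /eqP.
pose y i := `|v 0 i| / x i.
have xp (i : 'I_n) : 0 < x i by apply: xpos.
case: (@arg_maxP _ _ _ j0 xpredT y isT) => j _ Hj.
have yj0 : 0 < y j0 by rewrite /y divr_gt0 ?normr_gt0.
have yj : 0 < y j by apply: lt_le_trans yj0 (Hj j0 isT).
have Hrow' := Hrow j (ltn_ord j).
have Qge0 (i : 'I_n) : 0 <= Q i j by rewrite mxE; case: ifP => _; apply: ler0n.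
have e : \sum_(i < n) v 0 i * Q i j = r * v 0 j.
  by move/rowP: Hv => /(_ j); rewrite !mxE.
have h1 : r * `|v 0 j| <= y j * rs n adj x j.
  rewrite -Qmat_col // mulr_sumr -(ger0_norm (ltW r0)) -normrM -e.
  apply: le_trans (ler_norm_sum _ _ _) _; apply: ler_sum => i _.
  rewrite normrM (ger0_norm (Qge0 i)) mulrA ler_wpM2r //.
  have -> : `|v 0 i| = y i * x i by rewrite /y divfK ?gt_eqF.
  apply: ler_wpM2r; first exact: ltW.
  by have := Hj i isT.
have h2 : y j * rs n adj x j < y j * (U * x j) by rewrite ltr_pM2l.
have h3 : y j * (U * x j) <= r * `|v 0 j|.
  have -> : y j * (U * x j) = U * `|v 0 j|.
    by rewrite /y; field; rewrite gt_eqF.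
  by apply: ler_wpM2r.
have := lt_le_trans (le_lt_trans h1 h2) h3; by rewrite ltxx.
Qed.

Lemma q_lower n (adj : nat -> nat -> bool) (v : nat -> R) (r : R) :
  (forall a b, adj a b = adj b a) -> (forall a, adj a a = false) ->
  (exists j, (j < n)%N /\ v j != 0) ->
  (forall j, (j < n)%N -> rs n adj v j = r * v j) ->
  r <= q_sl R n adj.
Proof.
move=> sym irr [j0 [j0n vj0]] Hrow.
rewrite /q_sl /lambda_max.
set Q := Qmat R n adj.
have : eigenvalue Q r.
  apply/eigenvalueP; exists (\row_(i < n) v i).
    apply/rowP => j; rewrite !mxE.
    under eq_bigr do rewrite mxE.
    by rewrite Qmat_col // Hrow.
  apply/negP => /eqP /rowP /(_ (Ordinal j0n)); rewrite !mxE => /eqP.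
  by rewrite (negPf vj0).
rewrite eigenvalue_root_char => rroot.
apply: sorted_le_last; first exact: sorted_roots.
have := roots_on_rootsR (monic_neq0 (char_poly_monic Q)) r.
by rewrite rroot andbT => <-.
Qed.


Lemma sum_const_on {a b : nat} {F : nat -> R} {c : R} :
  (forall i, (a <= i < b)%N -> F i = c) -> \sum_(a <= i < b) F i = c *+ (b - a).
Proof. by move=> H; rewrite -sumr_const_nat; apply: eq_big_nat. Qed.

Lemma sum_zero_on {a b : nat} {F : nat -> R} :
  (forall i, (a <= i < b)%N -> F i = 0) -> \sum_(a <= i < b) F i = 0.
Proof. by move=> H; rewrite (sum_const_on H) mul0rn. Qed.

Definition glue' (m : nat) (A : nat -> nat -> bool) (i j : nat) : bool :=
  (i != j) &&
  (((i < m) && (j < m) && A i j)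
    || ((m <= i) && (m <= j) && ((i - m) %/ 4 == (j - m) %/ 4))
    || ((i == 0) && (m <= j)) || ((j == 0) && (m <= i)))%N.

Lemma glue_sym m A : (forall a b, A a b = A b a) -> forall a b, glue' m A a b = glue' m A b a.
Proof.
move=> sA a b; rewrite /glue' sA eq_sym; congr (_ && _).
by rewrite (eq_sym ((a - m) %/ 4)%N); case: (b < m)%N; case: (a < m)%N; case: (m <= a)%N; case: (m <= b)%N;
   case: (a == 0)%N; case: (b == 0)%N; rewrite /= ?andbF ?orbF ?orbT.
Qed.

Lemma glue_irr m A a : glue' m A a a = false.
Proof. by rewrite /glue' eqxx. Qed.

Lemma glue_row_U m A n (x : nat -> R) (al : R) j :
  (0 < m)%N -> (m <= n)%N -> (j < m)%N -> (forall i, (m <= i)%N -> x i = al) ->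
  rs n (glue' m A) x j = \sum_(0 <= i < m) (glue' m A j i)%:R * (x j + x i)
     + ((j == 0)%N%:R * (x 0%N + al)) *+ (n - m).
Proof.
move=> m0 mn jm xal; rewrite /rs (big_cat_nat (leq0n m) mn) /=; congr (_ + _).
apply: sum_const_on => i /andP [mi iN].
have -> : glue' m A j i = (j == 0)%N by rewrite /glue'; lia.
rewrite (xal i) //; case: j {jm} => [|j] /=; first by rewrite mul1r.
by rewrite !mul0r.
Qed.

Ltac decide_neq :=
  repeat match goal with |- context [(?x != ?y)%N] =>
    first [ let E := fresh in (have E : (x != y)%N = true by lia); rewrite E; clear E
          | let E := fresh in (have E : (x != y)%N = false by lia); rewrite E; clear E ] end.

Lemma block_count {a j : nat} {c : R} :
  (a <= j < a + 4)%N -> \sum_(a <= i < a + 4) (i != j)%:R * c = c *+ 3.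
Proof.
move=> /andP [aj ja].
have [r [-> r4]] : exists r, (j = a + r /\ r < 4)%N by exists (j - a)%N; split; lia.
rewrite big_ltn; last lia.
rewrite big_ltn; last lia.
rewrite big_ltn; last lia.
rewrite big_ltn; last lia.
rewrite big_geq; last lia.
case: r r4 => [|[|[|[|]]]] // _; decide_neq;
  by rewrite ?mul0r ?mul1r ?add0r ?addr0 !mulrS mulr0n addr0.
Qed.

Lemma glue_row_K m A n (x : nat -> R) (al : R) j :
  (0 < m)%N -> ((n - m) %% 4 = 0)%N -> (m <= j < n)%N -> (forall i, (m <= i)%N -> x i = al) ->
  rs n (glue' m A) x j = x 0%N + al + al *+ 6.
Proof.
move=> m0 n4 /andP [mj jn] xal.
have mn : (m <= n)%N by lia.
rewrite /rs (big_cat_nat (leq0n m) mn) /= xal //; congr (_ + _).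
  rewrite big_ltn // (sum_zero_on (a:=1)) ?addr0.
    have -> : glue' m A j 0 = true by rewrite /glue'; lia.
    by rewrite mul1r addrC.
  move=> i /andP [i1 im]; have -> : glue' m A j i = false by rewrite /glue'; lia.
  by rewrite mul0r.
set k := ((j - m) %/ 4)%N.
have e1 : (m <= m + 4 * k)%N by lia.
have e2 : (m + 4 * k <= m + 4 * k + 4)%N by lia.
have e3 : (m + 4 * k + 4 <= n)%N by rewrite /k; lia.
rewrite (big_cat_nat e1 (leq_trans e2 e3)) (big_cat_nat e2 e3) /=.
rewrite (sum_zero_on (a := m)); last first.
  move=> i /andP [mi ik]; have -> : glue' m A j i = false by rewrite /glue' /k in ik *; lia.
  by rewrite mul0r.
rewrite (sum_zero_on (a := m + 4 * k + 4)); last first.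
  move=> i /andP [mi ik]; have -> : glue' m A j i = false by rewrite /glue' /k in mi *; lia.
  by rewrite mul0r.
rewrite add0r addr0.
have -> : al *+ 6 = (al + al) *+ 3 by rewrite -mulr2n -mulrnA.
rewrite -(block_count (a := m + 4 * k) (j := j)); last by rewrite /k; lia.
apply: eq_big_nat => i /andP [i1 i2]; rewrite xal; last lia.
have -> // : glue' m A j i = (i != j).
rewrite /glue' /k in i1 i2 *; lia.
Qed.


Lemma glue_family m A n (L : seq R) (t al U : R) :
  (forall a b, A a b = A b a) ->
  (0 < m)%N -> size L = m -> (m <= n)%N -> ((n - m) %% 4 = 0)%N ->
  0 < t -> 0 < al -> (forall k, (0 < k < m)%N -> 0 < nth al L k) ->
  (forall j, (j < m)%N ->
     \sum_(0 <= i < m) (glue' m A j i)%:R *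
        ((if (j == 0)%N then t else nth al L j) + (if (i == 0)%N then t else nth al L i))
     + ((j == 0)%N%:R * (t + al)) * (n - m)%:R
     < U * (if (j == 0)%N then t else nth al L j)) ->
  ((m < n)%N -> t + al + al *+ 6 < U * al) -> 0 < U ->
  q_sl R n (glue' m A) < U.
Proof.
move=> sA m0 sL mn n4 t0 al0 Lpos HU HK U0.
pose x k := if (k == 0)%N then t else nth al L k.
have xal i : (m <= i)%N -> x i = al.
  move=> mi; rewrite /x; have -> : (i == 0)%N = false by lia.
  by rewrite nth_default // sL.
apply: (@q_upper n (glue' m A) x U).
- exact: glue_sym.
- exact: glue_irr.
- exact: U0.
- move=> j jn; rewrite /x; case: ifP => // j0.
  case: (ltnP j m) => jm; last by rewrite nth_default // sL.
  by apply: Lpos; lia.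
move=> j jn; case: (ltnP j m) => jm.
  rewrite (@glue_row_U m A n x al j m0 mn jm xal); move: (HU j jm); by rewrite mulr_natr.
rewrite (@glue_row_K m A n x al j m0 n4) //; last by rewrite jm.
have -> : x j = al by apply: xal.
have -> : x 0%N = t by [].
by apply: HK; lia.
Qed.

End Gen.

Ltac expand_sum := rewrite ?big_nat_recl // big_geq //.





Lemma fam1 (R : rcfType) n : (7 <= n)%N -> (6 <= n)%N -> ((n - 6) %% 4 = 0)%N ->
  q_sl R n (G_adj 1) < n%:R + 3%:R / 2%:R.
Proof.
move=> n7 nm n4.
have Nm : 10%:R <= n%:R :> R by rewrite ler_nat; lia.
change (q_sl R n (glue' 6 (adj_of_edges (U_edges 1))) < n%:R + 3%:R / 2%:R).
apply: (@glue_family R 6 _ n [:: 0; (7%:R / 4%:R); (11%:R / 4%:R); (11%:R / 4%:R); (11%:R / 4%:R); (11%:R / 4%:R)] n%:R (5%:R / 2%:R)).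
{ by move=> a b; rewrite /adj_of_edges eq_sym orbC. }
{ by []. }
{ by []. }
{ exact: nm. }
{ exact: n4. }
{ lra. }
{ lra. }
{ by move=> [|[|[|[|[|[|[|k]]]]]]] //= _; lra. }
{ move=> j jm; rewrite natrB //.
  case: j jm => [|[|[|[|[|[|j]]]]]] // _; expand_sum; rewrite /glue' /adj_of_edges /=.
  all: nra. }
{ move=> mn; have N10 : 10%:R <= n%:R :> R by rewrite ler_nat; lia.
  nra. }
{ lra. }
Qed.

Lemma fam2 (R : rcfType) n : (7 <= n)%N -> (6 <= n)%N -> ((n - 6) %% 4 = 0)%N ->
  q_sl R n (G_adj 2) < n%:R + 3%:R / 2%:R.
Proof.
move=> n7 nm n4.
have Nm : 10%:R <= n%:R :> R by rewrite ler_nat; lia.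
change (q_sl R n (glue' 6 (adj_of_edges (U_edges 2))) < n%:R + 3%:R / 2%:R).
apply: (@glue_family R 6 _ n [:: 0; (3%:R / 4%:R); (3%:R); (11%:R / 4%:R); (3%:R); (11%:R / 4%:R)] n%:R (5%:R / 2%:R)).
{ by move=> a b; rewrite /adj_of_edges eq_sym orbC. }
{ by []. }
{ by []. }
{ exact: nm. }
{ exact: n4. }
{ lra. }
{ lra. }
{ by move=> [|[|[|[|[|[|[|k]]]]]]] //= _; lra. }
{ move=> j jm; rewrite natrB //.
  case: j jm => [|[|[|[|[|[|j]]]]]] // _; expand_sum; rewrite /glue' /adj_of_edges /=.
  all: nra. }
{ move=> mn; have N10 : 10%:R <= n%:R :> R by rewrite ler_nat; lia.
  nra. }
{ lra. }
Qed.

Lemma fam3 (R : rcfType) n : (7 <= n)%N -> (7 <= n)%N -> ((n - 7) %% 4 = 0)%N ->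
  q_sl R n (G_adj 3) < n%:R + 3%:R / 2%:R.
Proof.
move=> n7 nm n4.
have Nm : 7%:R <= n%:R :> R by rewrite ler_nat; lia.
change (q_sl R n (glue' 7 (adj_of_edges (U_edges 3))) < n%:R + 3%:R / 2%:R).
apply: (@glue_family R 7 _ n [:: 0; (5%:R); (11%:R / 2%:R); (11%:R / 2%:R); (11%:R / 2%:R); (11%:R / 2%:R); (1%:R)] n%:R (5%:R / 2%:R)).
{ by move=> a b; rewrite /adj_of_edges eq_sym orbC. }
{ by []. }
{ by []. }
{ exact: nm. }
{ exact: n4. }
{ lra. }
{ lra. }
{ by move=> [|[|[|[|[|[|[|[|k]]]]]]]] //= _; lra. }
{ move=> j jm; rewrite natrB //.
  case: j jm => [|[|[|[|[|[|[|j]]]]]]] // _; expand_sum; rewrite /glue' /adj_of_edges /=.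
  all: nra. }
{ move=> mn; have N10 : 11%:R <= n%:R :> R by rewrite ler_nat; lia.
  nra. }
{ lra. }
Qed.

Lemma fam4 (R : rcfType) n : (7 <= n)%N -> (7 <= n)%N -> ((n - 7) %% 4 = 0)%N ->
  q_sl R n (G_adj 4) < n%:R + 3%:R / 2%:R.
Proof.
move=> n7 nm n4.
have Nm : 7%:R <= n%:R :> R by rewrite ler_nat; lia.
change (q_sl R n (glue' 7 (adj_of_edges (U_edges 4))) < n%:R + 3%:R / 2%:R).
apply: (@glue_family R 7 _ n [:: 0; (3%:R / 2%:R); (11%:R / 2%:R); (19%:R / 4%:R); (11%:R / 2%:R); (19%:R / 4%:R); (1%:R)] n%:R (5%:R / 2%:R)).
{ by move=> a b; rewrite /adj_of_edges eq_sym orbC. }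
{ by []. }
{ by []. }
{ exact: nm. }
{ exact: n4. }
{ lra. }
{ lra. }
{ by move=> [|[|[|[|[|[|[|[|k]]]]]]]] //= _; lra. }
{ move=> j jm; rewrite natrB //.
  case: j jm => [|[|[|[|[|[|[|j]]]]]]] // _; expand_sum; rewrite /glue' /adj_of_edges /=.
  all: nra. }
{ move=> mn; have N10 : 11%:R <= n%:R :> R by rewrite ler_nat; lia.
  nra. }
{ lra. }
Qed.

Lemma fam5 (R : rcfType) n : (7 <= n)%N -> (9 <= n)%N -> ((n - 9) %% 4 = 0)%N ->
  q_sl R n (G_adj 5) < n%:R + 3%:R / 2%:R.
Proof.
move=> n7 nm n4.
have Nm : 9%:R <= n%:R :> R by rewrite ler_nat; lia.
change (q_sl R n (glue' 9 (adj_of_edges (U_edges 5))) < n%:R + 3%:R / 2%:R).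
apply: (@glue_family R 9 _ n [:: 0; (11%:R / 4%:R); (7%:R / 2%:R); (7%:R / 2%:R); (7%:R / 2%:R); (7%:R / 2%:R); (2%:R); (2%:R); (2%:R)] n%:R (2%:R)).
{ by move=> a b; rewrite /adj_of_edges eq_sym orbC. }
{ by []. }
{ by []. }
{ exact: nm. }
{ exact: n4. }
{ lra. }
{ lra. }
{ by move=> [|[|[|[|[|[|[|[|[|[|k]]]]]]]]]] //= _; lra. }
{ move=> j jm; rewrite natrB //.
  case: j jm => [|[|[|[|[|[|[|[|[|j]]]]]]]]] // _; expand_sum; rewrite /glue' /adj_of_edges /=.
  all: nra. }
{ move=> mn; have N10 : 13%:R <= n%:R :> R by rewrite ler_nat; lia.
  nra. }
{ lra. }
Qed.

Lemma fam6 (R : rcfType) n : (7 <= n)%N -> (9 <= n)%N -> ((n - 9) %% 4 = 0)%N ->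
  q_sl R n (G_adj 6) < n%:R + 3%:R / 2%:R.
Proof.
move=> n7 nm n4.
have Nm : 9%:R <= n%:R :> R by rewrite ler_nat; lia.
change (q_sl R n (glue' 9 (adj_of_edges (U_edges 6))) < n%:R + 3%:R / 2%:R).
apply: (@glue_family R 9 _ n [:: 0; (1%:R); (15%:R / 4%:R); (13%:R / 4%:R); (15%:R / 4%:R); (13%:R / 4%:R); (2%:R); (2%:R); (2%:R)] n%:R (2%:R)).
{ by move=> a b; rewrite /adj_of_edges eq_sym orbC. }
{ by []. }
{ by []. }
{ exact: nm. }
{ exact: n4. }
{ lra. }
{ lra. }
{ by move=> [|[|[|[|[|[|[|[|[|[|k]]]]]]]]]] //= _; lra. }
{ move=> j jm; rewrite natrB //.
  case: j jm => [|[|[|[|[|[|[|[|[|j]]]]]]]]] // _; expand_sum; rewrite /glue' /adj_of_edges /=.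
  all: nra. }
{ move=> mn; have N10 : 13%:R <= n%:R :> R by rewrite ler_nat; lia.
  nra. }
{ lra. }
Qed.

Lemma fam7 (R : rcfType) n : (7 <= n)%N -> (8 <= n)%N -> ((n - 8) %% 4 = 0)%N ->
  q_sl R n (G_adj 7) < n%:R + 3%:R / 2%:R.
Proof.
move=> n7 nm n4.
have Nm : 8%:R <= n%:R :> R by rewrite ler_nat; lia.
change (q_sl R n (glue' 8 (adj_of_edges (U_edges 7))) < n%:R + 3%:R / 2%:R).
apply: (@glue_family R 8 _ n [:: 0; (9%:R / 4%:R); (17%:R / 4%:R); (17%:R / 4%:R); (17%:R / 4%:R); (9%:R / 4%:R); (9%:R / 4%:R); (9%:R / 4%:R)] n%:R (2%:R)).
{ by move=> a b; rewrite /adj_of_edges eq_sym orbC. }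
{ by []. }
{ by []. }
{ exact: nm. }
{ exact: n4. }
{ lra. }
{ lra. }
{ by move=> [|[|[|[|[|[|[|[|[|k]]]]]]]]] //= _; lra. }
{ move=> j jm; rewrite natrB //.
  case: j jm => [|[|[|[|[|[|[|[|j]]]]]]]] // _; expand_sum; rewrite /glue' /adj_of_edges /=.
  all: nra. }
{ move=> mn; have N10 : 12%:R <= n%:R :> R by rewrite ler_nat; lia.
  nra. }
{ lra. }
Qed.

Lemma fam8 (R : rcfType) n : (7 <= n)%N -> (6 <= n)%N -> ((n - 6) %% 4 = 0)%N ->
  q_sl R n (G_adj 8) < n%:R + 3%:R / 2%:R.
Proof.
move=> n7 nm n4.
have Nm : 10%:R <= n%:R :> R by rewrite ler_nat; lia.
change (q_sl R n (glue' 6 (adj_of_edges (U_edges 8))) < n%:R + 3%:R / 2%:R).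
apply: (@glue_family R 6 _ n [:: 0; (3%:R / 2%:R); (11%:R / 4%:R); (11%:R / 4%:R); (11%:R / 4%:R); (3%:R / 2%:R)] n%:R (5%:R / 2%:R)).
{ by move=> a b; rewrite /adj_of_edges eq_sym orbC. }
{ by []. }
{ by []. }
{ exact: nm. }
{ exact: n4. }
{ lra. }
{ lra. }
{ by move=> [|[|[|[|[|[|[|k]]]]]]] //= _; lra. }
{ move=> j jm; rewrite natrB //.
  case: j jm => [|[|[|[|[|[|j]]]]]] // _; expand_sum; rewrite /glue' /adj_of_edges /=.
  all: nra. }
{ move=> mn; have N10 : 10%:R <= n%:R :> R by rewrite ler_nat; lia.
  nra. }
{ lra. }
Qed.

Lemma fam9 (R : rcfType) n : (7 <= n)%N -> (6 <= n)%N -> ((n - 6) %% 4 = 0)%N ->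
  q_sl R n (G_adj 9) < n%:R + 3%:R / 2%:R.
Proof.
move=> n7 nm n4.
have Nm : 10%:R <= n%:R :> R by rewrite ler_nat; lia.
change (q_sl R n (glue' 6 (adj_of_edges (U_edges 9))) < n%:R + 3%:R / 2%:R).
apply: (@glue_family R 6 _ n [:: 0; (1%:R); (11%:R / 4%:R); (2%:R); (11%:R / 4%:R); (11%:R / 4%:R)] n%:R (5%:R / 2%:R)).
{ by move=> a b; rewrite /adj_of_edges eq_sym orbC. }
{ by []. }
{ by []. }
{ exact: nm. }
{ exact: n4. }
{ lra. }
{ lra. }
{ by move=> [|[|[|[|[|[|[|k]]]]]]] //= _; lra. }
{ move=> j jm; rewrite natrB //.
  case: j jm => [|[|[|[|[|[|j]]]]]] // _; expand_sum; rewrite /glue' /adj_of_edges /=.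
  all: nra. }
{ move=> mn; have N10 : 10%:R <= n%:R :> R by rewrite ler_nat; lia.
  nra. }
{ lra. }
Qed.

Lemma fam10 (R : rcfType) n : (7 <= n)%N -> (7 <= n)%N -> ((n - 7) %% 4 = 0)%N ->
  q_sl R n (G_adj 10) < n%:R + 3%:R / 2%:R.
Proof.
move=> n7 nm n4.
have Nm : 7%:R <= n%:R :> R by rewrite ler_nat; lia.
change (q_sl R n (glue' 7 (adj_of_edges (U_edges 10))) < n%:R + 3%:R / 2%:R).
apply: (@glue_family R 7 _ n [:: 0; (5%:R / 2%:R); (5%:R); (13%:R / 4%:R); (5%:R); (7%:R); (9%:R / 4%:R)] n%:R (5%:R / 2%:R)).
{ by move=> a b; rewrite /adj_of_edges eq_sym orbC. }
{ by []. }
{ by []. }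
{ exact: nm. }
{ exact: n4. }
{ lra. }
{ lra. }
{ by move=> [|[|[|[|[|[|[|[|k]]]]]]]] //= _; lra. }
{ move=> j jm; rewrite natrB //.
  case: j jm => [|[|[|[|[|[|[|j]]]]]]] // _; expand_sum; rewrite /glue' /adj_of_edges /=.
  all: nra. }
{ move=> mn; have N10 : 11%:R <= n%:R :> R by rewrite ler_nat; lia.
  nra. }
{ lra. }
Qed.

Lemma fam11 (R : rcfType) n : (7 <= n)%N -> (8 <= n)%N -> ((n - 8) %% 4 = 0)%N ->
  q_sl R n (G_adj 11) < n%:R + 3%:R / 2%:R.
Proof.
move=> n7 nm n4.
have Nm : 8%:R <= n%:R :> R by rewrite ler_nat; lia.
change (q_sl R n (glue' 8 (adj_of_edges (U_edges 11))) < n%:R + 3%:R / 2%:R).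
apply: (@glue_family R 8 _ n [:: 0; (2%:R); (9%:R / 2%:R); (3%:R); (9%:R / 2%:R); (8%:R); (9%:R / 4%:R); (9%:R / 4%:R)] n%:R (2%:R)).
{ by move=> a b; rewrite /adj_of_edges eq_sym orbC. }
{ by []. }
{ by []. }
{ exact: nm. }
{ exact: n4. }
{ lra. }
{ lra. }
{ by move=> [|[|[|[|[|[|[|[|[|k]]]]]]]]] //= _; lra. }
{ move=> j jm; rewrite natrB //.
  case: j jm => [|[|[|[|[|[|[|[|j]]]]]]]] // _; expand_sum; rewrite /glue' /adj_of_edges /=.
  all: nra. }
{ move=> mn; have N10 : 12%:R <= n%:R :> R by rewrite ler_nat; lia.
  nra. }
{ lra. }
Qed.

Lemma leaf_sum (R : rcfType) s (F : nat -> R) c :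
  (forall i, (3 <= i < s + 3)%N -> F i = c) -> \sum_(3 <= i < s + 3) F i = c * s%:R.
Proof. by move=> H; rewrite (@sum_const_on R 3 (s + 3) F c H) mulr_natr addnK. Qed.

Lemma nth_leaf (R : rcfType) s (a b c d : R) i : (3 <= i < s + 3)%N ->
  nth d [:: a, b, c & nseq s 2%:R] i = 2%:R.
Proof. by case: i => [|[|[|i]]] //= Hi; rewrite nth_nseq; case: ifP => //; lia. Qed.

Ltac decide_glue :=
  repeat match goal with |- context [glue' ?m ?A ?j ?i] =>
    first [ let E := fresh in (have E : glue' m A j i = true by rewrite /glue' /U12_adj; lia); rewrite E; clear E
          | let E := fresh in (have E : glue' m A j i = false by rewrite /glue' /U12_adj; lia); rewrite E; clear E ] end.

Lemma famG12 (R : rcfType) s n : (3 <= s)%N -> (s + 7 <= n)%N -> ((n - s - 3) %% 4 = 0)%N ->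
  q_sl R n (G12_adj s) < n%:R + 3%:R / 2%:R.
Proof.
move=> s3 sn n4.
set N := n%:R : R; set S := s%:R : R.
have NS : S + 7%:R <= N by rewrite /N /S -natrD ler_nat.
have S3 : 3%:R <= S by rewrite /S ler_nat.
change (q_sl R n (glue' (s + 3) (U12_adj s)) < N + 3%:R / 2%:R).
pose w := S / 4%:R; pose g := (N + 2%:R * S) / 7%:R.
have Hw : S = 4%:R * w by rewrite /w; field.
have Hg : N + 2%:R * S = 7%:R * g by rewrite /g; field.
have nm3 : (n - (s + 3))%:R = N - S - 3%:R :> R.
  by rewrite natrB; [rewrite natrD /N /S; ring | lia].
apply: (@glue_family R (s + 3) _ n (0 :: w :: g :: nseq s 2%:R) N 3%:R).
{ by move=> a b; rewrite /U12_adj; lia. }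
{ lia. }
{ by rewrite /= size_nseq addn3. }
{ lia. }
{ by rewrite subnDA. }
{ lra. }
{ lra. }
{ move=> [|[|[|k]]] //= H.
  - rewrite /w; lra.
  - rewrite /g; lra.
  rewrite nth_nseq; case: ifP => _; lra. }
{ move=> j jm; rewrite nm3.
  rewrite (@big_cat_nat _ _ _ 3) //; last lia.
  rewrite big_nat_recl // big_nat_recl // big_nat_recl // big_geq //=.
  case: j jm => [|[|[|k]]] jm.
  { rewrite (@leaf_sum R s _ (N + 2%:R)); last first.
      move=> i Hi /=; rewrite (@nth_leaf R s _ _ _ _ i Hi).
      have -> : glue' (s + 3) (U12_adj s) 0 i = true by rewrite /glue' /U12_adj; lia.
      have -> : (i == 0)%N = false by lia.
      by rewrite mul1r.
    decide_glue; rewrite -/S /=.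
    have : 0 <= g by rewrite /g; lra.
    rewrite /g in Hg *; nra. }
  { rewrite (@leaf_sum R s _ (w + 2%:R)); last first.
      move=> i Hi /=; rewrite (@nth_leaf R s _ _ _ _ i Hi).
      have -> : glue' (s + 3) (U12_adj s) 1 i = true by rewrite /glue' /U12_adj; lia.
      have -> : (i == 0)%N = false by lia.
      by rewrite mul1r.
    decide_glue; rewrite -/S /=.
    have w0 : 0 <= w by rewrite /w; lra.
    have := mulr_ge0 w0 (_ : 0 <= N - S - 7%:R) => H.
    have {H} := H ltac:(lra).
    rewrite Hw; nra. }
  { rewrite (@leaf_sum R s _ (g + 2%:R)); last first.
      move=> i Hi /=; rewrite (@nth_leaf R s _ _ _ _ i Hi).
      have -> : glue' (s + 3) (U12_adj s) 2 i = true by rewrite /glue' /U12_adj; lia.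
      have -> : (i == 0)%N = false by lia.
      by rewrite mul1r.
    decide_glue; rewrite -/S /=.
    have g0 : 0 <= g by rewrite /g; lra.
    have := mulr_ge0 g0 (_ : 0 <= N - S - 7%:R) => H.
    have {H} := H ltac:(lra).
    nra. }
  rewrite (@leaf_sum R s _ 0); last first.
    move=> i Hi /=.
    have -> : glue' (s + 3) (U12_adj s) k.+3 i = false by rewrite /glue' /U12_adj; lia.
    by rewrite mul0r.
  decide_glue; rewrite -/S /= nth_nseq.
  have -> : (k < s)%N by lia.
  have : 0 <= w by rewrite /w; lra.
  have : 0 <= g by rewrite /g; lra.
  rewrite /w /g; lra. }
{ move=> mn; rewrite !mulr_natl; lra. }
{ lra. }
Qed.

Ltac decide_K :=
  repeat match goal with |- context [Kplus_adj ?j ?i] =>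
    first [ let E := fresh in (have E : Kplus_adj j i = true by rewrite /Kplus_adj; lia); rewrite E; clear E
          | let E := fresh in (have E : Kplus_adj j i = false by rewrite /Kplus_adj; lia); rewrite E; clear E ] end.

Ltac decide_13 :=
  repeat match goal with |- context [G13_adj ?j ?i] =>
    first [ let E := fresh in (have E : G13_adj j i = true by rewrite /G13_adj; lia); rewrite E; clear E
          | let E := fresh in (have E : G13_adj j i = false by rewrite /G13_adj; lia); rewrite E; clear E ] end.

Lemma mulrn_sub (R : rcfType) (c : R) n m : (m <= n)%N -> c *+ (n - m)%N = c * (n%:R - m%:R).
Proof. by move=> mn; rewrite -natrB // mulr_natr. Qed.

Definition gK {R : rcfType} (N t : R) : R :=
  (t - N) * (t - 4%:R) * (t - 2%:R) - 4%:R * (t - 2%:R) - 2%:R * (N - 4%:R) * (t - 4%:R).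

Lemma K_lower (R : rcfType) n (L : R) : (7 <= n)%N ->
  n%:R + 3%:R / 2%:R <= L -> L <= n%:R + 2%:R -> gK n%:R L <= 0 ->
  L <= q_sl R n Kplus_adj.
Proof.
move=> n7 HL1 HL2 HgL.
set N := n%:R : R.
have N7 : 7%:R <= N by rewrite /N ler_nat.
pose p : {poly R} := ('X - N%:P) * ('X - 4%:R%:P) * ('X - 2%:R%:P)
   - 4%:R%:P * ('X - 2%:R%:P) - (2%:R * (N - 4%:R))%:P * ('X - 4%:R%:P).
have pE t : p.[t] = gK N t by rewrite /p /gK !hornerE.
have [lam /andP [l1 l2]] : exists2 lam, L <= lam <= N + 2%:R & root p lam.
  apply: poly_ivt => //; rewrite !pE HgL /= /gK; nra.
move=> /rootP; rewrite pE => glam.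
apply: (le_trans l1).
have l4 : lam - 4%:R != 0 by apply/eqP; lra.
have l2' : lam - 2%:R != 0 by apply/eqP; lra.
pose v i : R := if (i < 2)%N then 1 else if (i < 4)%N then 2%:R / (lam - 4%:R) else 2%:R / (lam - 2%:R).
apply: (@q_lower R n Kplus_adj v lam).
- by move=> a b; rewrite /Kplus_adj; lia.
- by move=> a; rewrite /Kplus_adj eqxx.
- by exists 0%N; split; [lia | rewrite /v /= oner_neq0].
move=> j jn; rewrite /rs (@big_cat_nat _ _ _ 4) //; last lia.
rewrite big_nat_recl // big_nat_recl // big_nat_recl // big_nat_recl // big_geq //=.
case: j jn => [|[|[|[|j]]]] jn.
- rewrite (@sum_const_on R 4 n _ (1 + 2%:R / (lam - 2%:R))); last first.
    move=> i Hi; decide_K; rewrite /v.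
    have -> : (i < 2)%N = false by lia.
    have -> : (i < 4)%N = false by lia.
    by rewrite mul1r.
  rewrite /v /=; decide_K.
  rewrite mulrn_sub; last lia.
  rewrite -/N [LHS](_ : _ = lam - gK N lam / ((lam - 4%:R) * (lam - 2%:R))).
    by rewrite glam mul0r subr0 mulr1.
  by rewrite /gK; field; rewrite l4 l2'.
- rewrite (@sum_const_on R 4 n _ (1 + 2%:R / (lam - 2%:R))); last first.
    move=> i Hi; decide_K; rewrite /v.
    have -> : (i < 2)%N = false by lia.
    have -> : (i < 4)%N = false by lia.
    by rewrite mul1r.
  rewrite /v /=; decide_K.
  rewrite mulrn_sub; last lia.
  rewrite -/N [LHS](_ : _ = lam - gK N lam / ((lam - 4%:R) * (lam - 2%:R))).
    by rewrite glam mul0r subr0 mulr1.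
  by rewrite /gK; field; rewrite l4 l2'.
- rewrite (@sum_const_on R 4 n _ 0); last first.
    move=> i Hi; decide_K; by rewrite mul0r.
  rewrite /v /=; decide_K; rewrite mul0rn addr0.
  by field; rewrite l4.
- rewrite (@sum_const_on R 4 n _ 0); last first.
    move=> i Hi; decide_K; by rewrite mul0r.
  rewrite /v /=; decide_K; rewrite mul0rn addr0.
  by field; rewrite l4.
- rewrite (@sum_const_on R 4 n _ 0); last first.
    move=> i Hi; decide_K; by rewrite mul0r.
  rewrite /v /=; decide_K; rewrite mul0rn addr0.
  by field; rewrite l2'.
Qed.

Lemma G13_upper (R : rcfType) n (mu kap bet : R) : (7 <= n)%N ->
  let N := n%:R in let a := N - 3%:R in let b := bet * a in
  0 < mu -> 0 < kap -> 0 < bet ->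
  a + a + (a + kap) * (N - 3%:R) < (N + mu) * a ->
  (b + kap) * (N - 3%:R) < (N + mu) * b ->
  (kap + a) + (kap + a) + (kap + b) < (N + mu) * kap ->
  q_sl R n G13_adj < N + mu.
Proof.
move=> n7 N a b mu0 k0 b0 H0 H2 H3.
have N7 : 7%:R <= N by rewrite /N ler_nat.
have a0 : 0 < a by rewrite /a; lra.
have bp : 0 < b by rewrite /b mulr_gt0.
pose x i : R := if (i < 2)%N then a else if (i == 2)%N then b else kap.
apply: (@q_upper R n G13_adj x).
- by move=> p q; rewrite /G13_adj; lia.
- by move=> p; rewrite /G13_adj eqxx.
- lra.
- by move=> j _; rewrite /x; case: ifP => _ //; case: ifP.
move=> j jn; rewrite /rs (@big_cat_nat _ _ _ 3) //; last lia.
rewrite big_nat_recl // big_nat_recl // big_nat_recl // big_geq //=.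
case: j jn => [|[|[|j]]] jn.
- rewrite (@sum_const_on R 3 n _ (a + kap)); last first.
    move=> i Hi; decide_13; rewrite /x.
    have -> : (i < 2)%N = false by lia.
    have -> : (i == 2)%N = false by lia.
    by rewrite mul1r.
  rewrite /x /=; decide_13; rewrite mulrn_sub; last lia.
  rewrite -/N; lra.
- rewrite (@sum_const_on R 3 n _ (a + kap)); last first.
    move=> i Hi; decide_13; rewrite /x.
    have -> : (i < 2)%N = false by lia.
    have -> : (i == 2)%N = false by lia.
    by rewrite mul1r.
  rewrite /x /=; decide_13; rewrite mulrn_sub; last lia.
  rewrite -/N; lra.
- rewrite (@sum_const_on R 3 n _ (b + kap)); last first.
    move=> i Hi; decide_13; rewrite /x.
    have -> : (i < 2)%N = false by lia.
    have -> : (i == 2)%N = false by lia.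
    by rewrite mul1r.
  rewrite /x /=; decide_13; rewrite mulrn_sub; last lia.
  rewrite -/N; lra.
rewrite (@sum_const_on R 3 n _ 0); last first.
  move=> i Hi; decide_13; by rewrite mul0r.
rewrite /x /=; decide_13; rewrite mul0rn addr0.
lra.
Qed.

Lemma K_low32 (R : rcfType) n : (7 <= n)%N -> n%:R + 3%:R / 2%:R <= q_sl R n Kplus_adj.
Proof.
move=> n7; apply: K_lower => //; first lra.
have N7 : 7%:R <= n%:R :> R by rewrite ler_nat.
rewrite /gK; nra.
Qed.

Lemma K_low74 (R : rcfType) n : (11 <= n)%N -> n%:R + 7%:R / 4%:R <= q_sl R n Kplus_adj.
Proof.
move=> n11; have N11 : 11%:R <= n%:R :> R by rewrite ler_nat.
apply: K_lower; [lia | lra | lra |].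
rewrite /gK; nra.
Qed.

Theorem lemma2p9 (R : rcfType) :
  (forall (i n : nat), (1 <= i <= 11)%N -> (7 <= n)%N -> (U_size i <= n)%N ->
     ((n - U_size i) %% 4 = 0)%N ->
     q_sl R n (G_adj i) < q_sl R n Kplus_adj)
  /\ (forall (s n : nat), (3 <= s)%N -> (s + 7 <= n)%N -> ((n - s - 3) %% 4 = 0)%N ->
     q_sl R n (G12_adj s) < q_sl R n Kplus_adj)
  /\ (forall n : nat, (7 <= n)%N ->
     q_sl R n G13_adj < q_sl R n Kplus_adj).
Proof.
split; [|split].
- move=> i n /andP [i1 i11] n7 nm n4.
  apply: (lt_le_trans _ (K_low32 R n n7)).
  case: i i1 i11 nm n4 => [|[|[|[|[|[|[|[|[|[|[|[|i]]]]]]]]]]]] // _ _ nm n4.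
  + exact: fam1.
  + exact: fam2.
  + exact: fam3.
  + exact: fam4.
  + exact: fam5.
  + exact: fam6.
  + exact: fam7.
  + exact: fam8.
  + exact: fam9.
  + exact: fam10.
  + exact: fam11.
- move=> s n s3 sn n4.
  have n7 : (7 <= n)%N by lia.
  apply: (lt_le_trans _ (K_low32 R n n7)).
  exact: famG12.
move=> n n7.
have N7 : 7%:R <= n%:R :> R by rewrite ler_nat.
case: (leqP n 10) => n10.
  have N10 : n%:R <= 10%:R :> R by rewrite ler_nat.
  apply: (lt_le_trans _ (K_low32 R n n7)).
  apply: (@G13_upper R n _ (12%:R / 5%:R) (11%:R / 20%:R)) => //; try lra; nra.
have N11 : 11%:R <= n%:R :> R by rewrite ler_nat.
apply: (lt_le_trans _ (K_low74 R n n10)).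
apply: (@G13_upper R n _ (27%:R / 10%:R) (3%:R / 5%:R)) => //; try lra; nra.
Qed.
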